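(* For $t>1$ let $a=\frac{t\theta}{\sqrt{t^2-1}}$, $b=\frac{\theta}{\sqrt{t^2-1}}$, $e_1=(\cos a\cos\phi,\cos a\sin\phi,\sin a\cos\phi,\sin a\sin\phi)$ and $Y_t:\mathbb{R}^2\to\mathbb{R}^6_2$, $Y_t(\theta,\phi)=(e_1,\cos b,\sin b)$. Then $y_t=[Y_t]:\mathbb{R}^2\to Q^4_1$ is a conformal spacelike Willmore immersion (with respect to $z=\theta+i\phi$, for which $Y_t$ is the canonical lift) which is not S-Willmore; its conformal Hopf differential is $\kappa=-\frac{it}{2\sqrt2\sqrt{t^2-1}}(L-R)$. If $t=p/q$ with $p>q\geq1$ coprime integers, $y_t$ descends to a spacelike Willmore torus $\mathbb{R}^2/\Lambda\to Q^4_1$ with $\Lambda$ generated by $(2\pi q\sqrt{t^2-1},0)$ and $(0,2\pi)$, and its Willmore functional is $W(y_t)=\frac{p^2}{\sqrt{p^2-q^2}}\pi^2$; the minimum of these values over all such $p,q$ is $\frac{4}{\sqrt3}\pi^2$.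
   Context: $\mathbb{R}^6_2$ is $\mathbb{R}^6$ with inner product $\langle x,y\rangle=\sum_{i=1}^4x_iy_i-x_5y_5-x_6y_6$ (extended complex-bilinearly), with a fixed orientation; $C^5$ its light cone; $Q^4_1=\{[x]\in\mathbb{R}P^5:x\in C^5\setminus\{0\}\}$. A conformal spacelike immersion $y$ into $Q^4_1$ satisfies, for any local lift $Y$ and complex coordinate $z=u+iv$, $\langle Y_z,Y_z\rangle=0$, $\langle Y_z,Y_{\bar z}\rangle>0$ ($Y_z=\frac12(Y_u-iY_v)$); the canonical lift has $\langle Y_z,Y_{\bar z}\rangle=\frac12$. $V=\mathrm{Span}\{Y,Y_u,Y_v,Y_{z\bar z}\}$, $V^\perp$ its orthogonal complement; $N\in\Gamma(V)$ with $\langle N,Y_z\rangle=\langle N,N\rangle=0$, $\langle N,Y\rangle=-1$; $L,R\in\Gamma(V^\perp)$ real null with $\langle L,R\rangle=-1$ and $\{Y,Y_u,Y_v,N,R,L\}$ positively oriented. $Y_{zz}=-\frac s2Y+\kappa$ defines the conformal Hopf differential $\kappa$; $D$ is the normal connection on $V^\perp$. The Willmore functional is $W(y)=\frac i2\int_M\langle\kappa,\bar\kappa\rangle dz\wedge d\bar z$; $y$ is Willmore if it is critical for $W$ under all variations, equivalently $D_{\bar z}D_{\bar z}\kappa+\frac{\bar s}2\kappa=0$; S-Willmore if additionally $D_{\bar z}\kappa$ is parallel to $\kappa$. *)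

(* Defs.v *)
From Stdlib Require Import Reals Lra ClassicalEpsilon List.
Open Scope R_scope.

(* A vector of R^6 is a function nat -> R; only components 0..5 matter. *)
Definition vec := nat -> R.
Definition VF := R -> R -> vec.
Definition CR := (R * R)%type.           (* complex number (re, im) *)
Definition cvec := (vec * vec)%type.     (* complex vector (re, im) *)
Definition CVF := R -> R -> cvec.

Definition ip62 (x y : vec) : R :=
  x 0%nat * y 0%nat + x 1%nat * y 1%nat + x 2%nat * y 2%nat + x 3%nat * y 3%nat
  - x 4%nat * y 4%nat - x 5%nat * y 5%nat.

Definition veq (x y : vec) : Prop := forall i, (i < 6)%nat -> x i = y i.
Definition vzero : vec := fun _ => 0.
Definition vadd (x y : vec) : vec := fun i => x i + y i.
Definition vsub (x y : vec) : vec := fun i => x i - y i.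
Definition vscal (a : R) (x : vec) : vec := fun i => a * x i.

Definition cmul (a b : CR) : CR :=
  (fst a * fst b - snd a * snd b, fst a * snd b + snd a * fst b).
Definition cconj (a : CR) : CR := (fst a, - snd a).

(* complex-bilinear extension of the inner product *)
Definition cip (x y : cvec) : CR :=
  (ip62 (fst x) (fst y) - ip62 (snd x) (snd y),
   ip62 (fst x) (snd y) + ip62 (snd x) (fst y)).
Definition cvconj (x : cvec) : cvec := (fst x, fun i => - snd x i).
Definition cvscal (a : CR) (x : cvec) : cvec :=
  (fun i => fst a * fst x i - snd a * snd x i,
   fun i => fst a * snd x i + snd a * fst x i).
Definition cvadd (x y : cvec) : cvec := (vadd (fst x) (fst y), vadd (snd x) (snd y)).
Definition cvsub (x y : cvec) : cvec := (vsub (fst x) (fst y), vsub (snd x) (snd y)).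
Definition cvzero : cvec := (vzero, vzero).
Definition cveq (x y : cvec) : Prop := veq (fst x) (fst y) /\ veq (snd x) (snd y).
Definition of_real (x : vec) : cvec := (x, vzero).
Definition RF (F : VF) : CVF := fun u v => of_real (F u v).

(* the derivative of f at x (meaningful when f is differentiable at x) *)
Definition deriv1 (f : R -> R) (x : R) : R :=
  epsilon (inhabits 0) (fun l => derivable_pt_lim f x l).
Definition pu (F : VF) : VF := fun u v i => deriv1 (fun s => F s v i) u.
Definition pv (F : VF) : VF := fun u v i => deriv1 (fun s => F u s i) v.
Fixpoint iterd (ds : list bool) (F : VF) : VF :=
  match ds with
  | nil => F
  | cons d ds' => (if d then pu else pv) (iterd ds' F)
  end.
Definition smoothVF (F : VF) : Prop :=
  forall ds u v i, (i < 6)%nat ->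
    (exists l, derivable_pt_lim (fun s => iterd ds F s v i) u l) /\
    (exists l, derivable_pt_lim (fun s => iterd ds F u s i) v l).
Definition smoothCVF (F : CVF) : Prop :=
  smoothVF (fun u v => fst (F u v)) /\ smoothVF (fun u v => snd (F u v)).

(* d/dz = 1/2 (d/du - i d/dv),  d/dzbar = 1/2 (d/du + i d/dv),  z = u + i v *)
Definition dz (F : CVF) : CVF := fun u v =>
  let a := fun u v => fst (F u v) in let b := fun u v => snd (F u v) in
  (vscal (1/2) (vadd (pu a u v) (pv b u v)), vscal (1/2) (vsub (pu b u v) (pv a u v))).
Definition dzb (F : CVF) : CVF := fun u v =>
  let a := fun u v => fst (F u v) in let b := fun u v => snd (F u v) in
  (vscal (1/2) (vsub (pu a u v) (pv b u v)), vscal (1/2) (vadd (pu b u v) (pv a u v))).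

Definition conf_spacelike_lift (Y : VF) : Prop :=
  smoothVF Y /\
  forall u v,
    (exists i, (i < 6)%nat /\ Y u v i <> 0) /\
    ip62 (Y u v) (Y u v) = 0 /\
    cip (dz (RF Y) u v) (dz (RF Y) u v) = (0, 0) /\
    snd (cip (dz (RF Y) u v) (dzb (RF Y) u v)) = 0 /\
    0 < fst (cip (dz (RF Y) u v) (dzb (RF Y) u v)).

Definition canonical_lift (Y : VF) : Prop :=
  conf_spacelike_lift Y /\
  forall u v, cip (dz (RF Y) u v) (dzb (RF Y) u v) = (1/2, 0).

(* V = Span{Y, Y_u, Y_v, Y_{z zbar}} (complexified) at (u,v) *)
Definition inV (Y : VF) (u v : R) (w : cvec) : Prop :=
  exists a b c d : CR,
    cveq w (cvadd (cvadd (cvscal a (of_real (Y u v))) (cvscal b (of_real (pu Y u v))))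
                  (cvadd (cvscal c (of_real (pv Y u v))) (cvscal d (dzb (dz (RF Y)) u v)))).
Definition inVperp (Y : VF) (u v : R) (w : cvec) : Prop :=
  cip w (of_real (Y u v)) = (0, 0) /\
  cip w (of_real (pu Y u v)) = (0, 0) /\
  cip w (of_real (pv Y u v)) = (0, 0) /\
  cip w (dzb (dz (RF Y)) u v) = (0, 0).

Definition hopf (Y : VF) (kappa : CVF) (s : R -> R -> CR) : Prop :=
  canonical_lift Y /\ smoothCVF kappa /\
  forall u v, inVperp Y u v (kappa u v) /\
    cveq (dz (dz (RF Y)) u v)
         (cvadd (cvscal (cmul (-1/2, 0) (s u v)) (of_real (Y u v))) (kappa u v)).

(* eta = D_zbar xi : the V^perp-component of xi_zbar, for xi a section of V^perp *)
Definition Dzb (Y : VF) (xi eta : CVF) : Prop :=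
  forall u v, inVperp Y u v (eta u v) /\ inV Y u v (cvsub (dzb xi u v) (eta u v)).

(* Willmore: D_zbar D_zbar kappa + (sbar/2) kappa = 0 *)
Definition Willmore (Y : VF) : Prop :=
  exists kappa s eta1 eta2,
    hopf Y kappa s /\ smoothCVF eta1 /\ Dzb Y kappa eta1 /\ Dzb Y eta1 eta2 /\
    forall u v, cveq (cvadd (eta2 u v) (cvscal (cmul (1/2, 0) (cconj (s u v))) (kappa u v)))
                     cvzero.

Definition SWillmore (Y : VF) : Prop :=
  Willmore Y /\
  exists kappa s eta1,
    hopf Y kappa s /\ Dzb Y kappa eta1 /\
    forall u v, exists alpha beta : CR, (alpha, beta) <> ((0, 0), (0, 0)) /\
      cveq (cvadd (cvscal alpha (eta1 u v)) (cvscal beta (kappa u v))) cvzero.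

Fixpoint sumR (n : nat) (f : nat -> R) : R :=
  match n with O => 0 | S m => sumR m f + f m end.
Fixpoint detn (n : nat) (M : nat -> nat -> R) : R :=
  match n with
  | O => 1
  | S m => sumR (S m) (fun j => (-1) ^ j * M O j *
             detn m (fun i k => M (S i) (if Nat.ltb k j then k else S k)))
  end.
Definition det6 (x0 x1 x2 x3 x4 x5 : vec) : R :=
  detn 6 (fun i j => match i with
                     | 0 => x0 j | 1 => x1 j | 2 => x2 j | 3 => x3 j | 4 => x4 j
                     | _ => x5 j end).

Definition frame (Y : VF) (N L Rr : VF) : Prop :=
  forall u v,
    inV Y u v (of_real (N u v)) /\
    cip (of_real (N u v)) (dz (RF Y) u v) = (0, 0) /\
    ip62 (N u v) (N u v) = 0 /\ ip62 (N u v) (Y u v) = -1 /\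
    inVperp Y u v (of_real (L u v)) /\ inVperp Y u v (of_real (Rr u v)) /\
    ip62 (L u v) (L u v) = 0 /\ ip62 (Rr u v) (Rr u v) = 0 /\
    ip62 (L u v) (Rr u v) = -1 /\
    0 < det6 (Y u v) (pu Y u v) (pv Y u v) (N u v) (Rr u v) (L u v).

Definition is_RInt (f : R -> R) (a b l : R) : Prop :=
  exists pr : Riemann_integrable f a b, RiemannInt pr = l.
Definition is_RInt2 (F : R -> R -> R) (a b c d l : R) : Prop :=
  exists g : R -> R,
    (forall x, a <= x <= b -> is_RInt (fun y => F x y) c d (g x)) /\ is_RInt g a b l.

Definition periodic (Y : VF) (T1 T2 : R) : Prop :=
  forall u v, veq (Y (u + T1) v) (Y u v) /\ veq (Y u (v + T2)) (Y u v).

(* W(y) = (i/2) \int <kappa, kappabar> dz /\ dzbar = \int <kappa,kappabar> du dv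
   over the fundamental domain [0,T1] x [0,T2] *)
Definition Wval (Y : VF) (T1 T2 w : R) : Prop :=
  exists kappa s, hopf Y kappa s /\
    is_RInt2 (fun u v => fst (cip (kappa u v) (cvconj (kappa u v)))) 0 T1 0 T2 w.

Definition Yt (t : R) : VF := fun th ph i =>
  let a := t * th / sqrt (t ^ 2 - 1) in
  let b := th / sqrt (t ^ 2 - 1) in
  match i with
  | 0 => cos a * cos ph
  | 1 => cos a * sin ph
  | 2 => sin a * cos ph
  | 3 => sin a * sin ph
  | 4 => cos b
  | _ => sin b
  end.

Definition admissible (p q : nat) : Prop :=
  (1 <= q)%nat /\ (q < p)%nat /\ Nat.gcd p q = 1%nat.

(* Main.v *)
Require Import Defs.
From Stdlib Require Import Reals Lra Lia ClassicalEpsilon FunctionalExtensionality.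
Open Scope R_scope.

Lemma deriv1_eq f x l : derivable_pt_lim f x l -> deriv1 f x = l.
Proof.
  intro H. unfold deriv1.
  pose proof (epsilon_spec (inhabits 0) (fun l => derivable_pt_lim f x l) (ex_intro _ l H)) as H0.
  exact (uniqueness_limite f x _ _ H0 H).
Qed.

Lemma D_plus f g x lf lg : derivable_pt_lim f x lf -> derivable_pt_lim g x lg ->
  derivable_pt_lim (fun s => f s + g s) x (lf + lg).
Proof. intros; apply (derivable_pt_lim_plus f g); auto. Qed.
Lemma D_minus f g x lf lg : derivable_pt_lim f x lf -> derivable_pt_lim g x lg ->
  derivable_pt_lim (fun s => f s - g s) x (lf - lg).
Proof. intros; apply (derivable_pt_lim_minus f g); auto. Qed.
Lemma D_mult f g x lf lg : derivable_pt_lim f x lf -> derivable_pt_lim g x lg ->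
  derivable_pt_lim (fun s => f s * g s) x (lf * g x + f x * lg).
Proof. intros; apply (derivable_pt_lim_mult f g); auto. Qed.
Lemma D_opp f x lf : derivable_pt_lim f x lf ->
  derivable_pt_lim (fun s => - f s) x (- lf).
Proof. intros; apply (derivable_pt_lim_opp f); auto. Qed.
Lemma D_const c x : derivable_pt_lim (fun _ => c) x 0.
Proof. apply derivable_pt_lim_const. Qed.
Lemma D_id x : derivable_pt_lim (fun s => s) x 1.
Proof. apply derivable_pt_lim_id. Qed.
Lemma D_cos f x lf : derivable_pt_lim f x lf ->
  derivable_pt_lim (fun s => cos (f s)) x (- sin (f x) * lf).
Proof. intros H. apply (derivable_pt_lim_comp f cos); auto. apply derivable_pt_lim_cos. Qed.
Lemma D_sin f x lf : derivable_pt_lim f x lf ->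
  derivable_pt_lim (fun s => sin (f s)) x (cos (f x) * lf).
Proof. intros H. apply (derivable_pt_lim_comp f sin); auto. apply derivable_pt_lim_sin. Qed.
Lemma D_eq f x l l' : derivable_pt_lim f x l' -> l' = l -> derivable_pt_lim f x l.
Proof. intros H ->; auto. Qed.

Ltac dtac :=
  lazymatch goal with
  | |- derivable_pt_lim (fun s => s) _ _ => apply D_id
  | |- derivable_pt_lim (fun s => @?f s + @?g s) _ _ => apply (D_plus f g); dtac
  | |- derivable_pt_lim (fun s => @?f s - @?g s) _ _ => apply (D_minus f g); dtac
  | |- derivable_pt_lim (fun s => @?f s * @?g s) _ _ => apply (D_mult f g); dtac
  | |- derivable_pt_lim (fun s => - @?f s) _ _ => apply (D_opp f); dtac
  | |- derivable_pt_lim (fun s => cos (@?f s)) _ _ => apply (D_cos f); dtac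
  | |- derivable_pt_lim (fun s => sin (@?f s)) _ _ => apply (D_sin f); dtac
  | |- derivable_pt_lim (fun s => _) _ _ => apply D_const
  end.

Record C6 := mk6 { k0 : R; k1 : R; k2 : R; k3 : R; k4 : R; k5 : R }.

Definition EE1 (a v : R) : vec := fun i => match i with
  | 0 => cos a * cos v | 1 => cos a * sin v | 2 => sin a * cos v | 3 => sin a * sin v
  | _ => 0 end.
Definition EE2 (a v : R) : vec := fun i => match i with
  | 0 => - sin a * cos v | 1 => - sin a * sin v | 2 => cos a * cos v | 3 => cos a * sin v
  | _ => 0 end.
Definition EE3 (a v : R) : vec := fun i => match i with
  | 0 => - cos a * sin v | 1 => cos a * cos v | 2 => - sin a * sin v | 3 => sin a * cos v
  | _ => 0 end.
Definition EE4 (a v : R) : vec := fun i => match i with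
  | 0 => sin a * sin v | 1 => - sin a * cos v | 2 => - cos a * sin v | 3 => cos a * cos v
  | _ => 0 end.
Definition F1 (b : R) : vec := fun i => match i with
  | 0 | 1 | 2 | 3 => 0 | 4 => cos b | _ => sin b end.
Definition F2 (b : R) : vec := fun i => match i with
  | 0 | 1 | 2 | 3 => 0 | 4 => - sin b | _ => cos b end.

Definition fr (al be : R) (c : C6) : VF := fun u v i =>
  k0 c * EE1 (al * u) v i + k1 c * EE2 (al * u) v i + k2 c * EE3 (al * u) v i
  + k3 c * EE4 (al * u) v i + k4 c * F1 (be * u) i + k5 c * F2 (be * u) i.

Definition Du (al be : R) (c : C6) : C6 :=
  mk6 (- al * k1 c) (al * k0 c) (- al * k3 c) (al * k2 c) (- be * k5 c) (be * k4 c).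
Definition Dv (c : C6) : C6 := mk6 (- k2 c) (- k3 c) (k0 c) (k1 c) 0 0.

Ltac dest6 i := destruct i as [|[|[|[|[|i]]]]].

Lemma fr_du al be c u v i :
  derivable_pt_lim (fun s => fr al be c s v i) u (fr al be (Du al be c) u v i).
Proof.
  unfold fr, EE1, EE2, EE3, EE4, F1, F2, Du; dest6 i; simpl; eapply D_eq; try dtac; ring.
Qed.
Lemma fr_dv al be c u v i :
  derivable_pt_lim (fun s => fr al be c u s i) v (fr al be (Dv c) u v i).
Proof.
  unfold fr, EE1, EE2, EE3, EE4, F1, F2, Dv; dest6 i; simpl; eapply D_eq; try dtac; ring.
Qed.

Lemma pu_fr al be c : pu (fr al be c) = fr al be (Du al be c).
Proof.
  apply functional_extensionality; intro u; apply functional_extensionality; intro v;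
  apply functional_extensionality; intro i. unfold pu. apply deriv1_eq, fr_du.
Qed.
Lemma pv_fr al be c : pv (fr al be c) = fr al be (Dv c).
Proof.
  apply functional_extensionality; intro u; apply functional_extensionality; intro v;
  apply functional_extensionality; intro i. unfold pv. apply deriv1_eq, fr_dv.
Qed.

Fixpoint itC (al be : R) (ds : list bool) (c : C6) : C6 :=
  match ds with nil => c | cons d ds' => (if d then Du al be else Dv) (itC al be ds' c) end.
Lemma iterd_fr al be ds c : iterd ds (fr al be c) = fr al be (itC al be ds c).
Proof.
  induction ds as [|d ds IH]; simpl; auto. rewrite IH. destruct d; [apply pu_fr | apply pv_fr].
Qed.
Lemma smooth_fr al be c : smoothVF (fr al be c).
Proof.
  intros ds u v i Hi. rewrite iterd_fr. split; eexists; [apply fr_du | apply fr_dv].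
Qed.

Definition addC (c d : C6) := mk6 (k0 c + k0 d) (k1 c + k1 d) (k2 c + k2 d) (k3 c + k3 d) (k4 c + k4 d) (k5 c + k5 d).
Definition subC (c d : C6) := mk6 (k0 c - k0 d) (k1 c - k1 d) (k2 c - k2 d) (k3 c - k3 d) (k4 c - k4 d) (k5 c - k5 d).
Definition scC (r : R) (c : C6) := mk6 (r * k0 c) (r * k1 c) (r * k2 c) (r * k3 c) (r * k4 c) (r * k5 c).
Definition zC := mk6 0 0 0 0 0 0.
Definition ipC (c d : C6) := k0 c * k0 d + k1 c * k1 d + k2 c * k2 d + k3 c * k3 d - k4 c * k4 d - k5 c * k5 d.

Ltac fext := apply functional_extensionality; intro.

Lemma vadd_fr al be c d u v : vadd (fr al be c u v) (fr al be d u v) = fr al be (addC c d) u v.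
Proof. fext. unfold vadd, fr, addC; simpl; ring. Qed.
Lemma vsub_fr al be c d u v : vsub (fr al be c u v) (fr al be d u v) = fr al be (subC c d) u v.
Proof. fext. unfold vsub, fr, subC; simpl; ring. Qed.
Lemma vscal_fr al be r c u v : vscal r (fr al be c u v) = fr al be (scC r c) u v.
Proof. fext. unfold vscal, fr, scC; simpl; ring. Qed.
Lemma vzero_fr al be u v : vzero = fr al be zC u v.
Proof. fext. unfold vzero, fr, zC; simpl; ring. Qed.
Lemma vneg_fr al be c u v : (fun i => - fr al be c u v i) = fr al be (scC (-1) c) u v.
Proof. fext. unfold fr, scC; simpl; ring. Qed.

Definition cfr al be (p q : C6) : CVF := fun u v => (fr al be p u v, fr al be q u v).

Lemma RF_fr al be c : RF (fr al be c) = cfr al be c zC.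
Proof. fext. fext. unfold RF, of_real, cfr. f_equal. apply vzero_fr. Qed.
Lemma of_real_fr al be c u v : of_real (fr al be c u v) = cfr al be c zC u v.
Proof. unfold of_real, cfr. f_equal. apply vzero_fr. Qed.

Lemma dz_cfr al be p q : dz (cfr al be p q) =
  cfr al be (scC (1/2) (addC (Du al be p) (Dv q))) (scC (1/2) (subC (Du al be q) (Dv p))).
Proof.
  unfold dz, cfr. simpl.
  change (fun u v => fr al be p u v) with (fr al be p).
  change (fun u v => fr al be q u v) with (fr al be q).
  rewrite !pu_fr, !pv_fr. fext. fext. rewrite vadd_fr, vsub_fr, !vscal_fr. reflexivity.
Qed.
Lemma dzb_cfr al be p q : dzb (cfr al be p q) =
  cfr al be (scC (1/2) (subC (Du al be p) (Dv q))) (scC (1/2) (addC (Du al be q) (Dv p))).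
Proof.
  unfold dzb, cfr. simpl.
  change (fun u v => fr al be p u v) with (fr al be p).
  change (fun u v => fr al be q u v) with (fr al be q).
  rewrite !pu_fr, !pv_fr. fext. fext. rewrite vadd_fr, vsub_fr, !vscal_fr. reflexivity.
Qed.

Lemma ip_fr al be c d u v : ip62 (fr al be c u v) (fr al be d u v) = ipC c d.
Proof.
  assert (H1 := sin2_cos2 (al * u)). assert (H2 := sin2_cos2 v). assert (H3 := sin2_cos2 (be * u)).
  unfold Rsqr in *.
  transitivity ((k0 c * k0 d + k1 c * k1 d + k2 c * k2 d + k3 c * k3 d) *
     ((sin (al*u) * sin (al*u) + cos (al*u) * cos (al*u)) * (sin v * sin v + cos v * cos v))
     - (k4 c * k4 d + k5 c * k5 d) * (sin (be*u) * sin (be*u) + cos (be*u) * cos (be*u))).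
  - unfold ip62, fr, EE1, EE2, EE3, EE4, F1, F2; simpl; ring.
  - rewrite H1, H2, H3. unfold ipC; ring.
Qed.

Lemma cip_cfr al be p q r s u v :
  cip (cfr al be p q u v) (cfr al be r s u v) = (ipC p r - ipC q s, ipC p s + ipC q r).
Proof. unfold cip, cfr; simpl. rewrite !ip_fr. reflexivity. Qed.

Lemma cvscal_cfr al be a p q u v :
  cvscal a (cfr al be p q u v) = cfr al be (subC (scC (fst a) p) (scC (snd a) q)) (addC (scC (fst a) q) (scC (snd a) p)) u v.
Proof. unfold cvscal, cfr; simpl. f_equal; fext; unfold fr, subC, addC, scC; simpl; ring. Qed.
Lemma cvadd_cfr al be p q r s u v :
  cvadd (cfr al be p q u v) (cfr al be r s u v) = cfr al be (addC p r) (addC q s) u v.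
Proof. unfold cvadd, cfr; simpl. rewrite !vadd_fr. reflexivity. Qed.
Lemma cvsub_cfr al be p q r s u v :
  cvsub (cfr al be p q u v) (cfr al be r s u v) = cfr al be (subC p r) (subC q s) u v.
Proof. unfold cvsub, cfr; simpl. rewrite !vsub_fr. reflexivity. Qed.
Lemma cvconj_cfr al be p q u v : cvconj (cfr al be p q u v) = cfr al be p (scC (-1) q) u v.
Proof. unfold cvconj, cfr; simpl. rewrite vneg_fr. reflexivity. Qed.
Lemma cveq_cfr al be p q r s u v : p = r -> q = s -> cveq (cfr al be p q u v) (cfr al be r s u v).
Proof. intros -> ->. split; intros i _; reflexivity. Qed.

Definition cY := mk6 1 0 0 0 1 0.

Ltac csimp2 := repeat (first [
  match goal with |- context [pu (fr ?a ?b ?c)] => rewrite (pu_fr a b c) end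
 |match goal with |- context [pv (fr ?a ?b ?c)] => rewrite (pv_fr a b c) end
 |match goal with |- context [RF (fr ?a ?b ?c)] => rewrite (RF_fr a b c) end
 |match goal with |- context [dz (cfr ?a ?b ?c ?d)] => rewrite (dz_cfr a b c d) end
 |match goal with |- context [dzb (cfr ?a ?b ?c ?d)] => rewrite (dzb_cfr a b c d) end
 |match goal with |- context [of_real (fr ?a ?b ?c ?u ?v)] => rewrite (of_real_fr a b c u v) end
 |match goal with |- context [cvscal ?x (cfr ?a ?b ?c ?d ?u ?v)] => rewrite (cvscal_cfr a b x c d u v) end
 |match goal with |- context [cvconj (cfr ?a ?b ?c ?d ?u ?v)] => rewrite (cvconj_cfr a b c d u v) end
 |match goal with |- context [cvadd (cfr ?a ?b ?c ?d ?u ?v) (cfr ?a ?b ?c' ?d' ?u ?v)] => rewrite (cvadd_cfr a b c d c' d' u v) end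
 |match goal with |- context [cvsub (cfr ?a ?b ?c ?d ?u ?v) (cfr ?a ?b ?c' ?d' ?u ?v)] => rewrite (cvsub_cfr a b c d c' d' u v) end
 |match goal with |- context [cip (cfr ?a ?b ?c ?d ?u ?v) (cfr ?a ?b ?c' ?d' ?u ?v)] => rewrite (cip_cfr a b c d c' d' u v) end
 |match goal with |- context [ip62 (fr ?a ?b ?c ?u ?v) (fr ?a ?b ?c' ?u ?v)] => rewrite (ip_fr a b c c' u v) end
 ]).

Lemma pw3 x : x ^ 3 = x * x ^ 2. Proof. ring. Qed.
Lemma pw4 x : x ^ 4 = x ^ 2 * x ^ 2. Proof. ring. Qed.
Lemma pw5 x : x ^ 5 = x * x ^ 2 * x ^ 2. Proof. ring. Qed.
Lemma pw6 x : x ^ 6 = x ^ 2 * x ^ 2 * x ^ 2. Proof. ring. Qed.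
Definition Ax (x : R) := (x + / x) / 2.
Definition Bx (x : R) := (x - / x) / 2.
Ltac cl := unfold Ax, Bx; field; auto.

Ltac cunf := cbv beta iota zeta delta [ipC Du Dv scC addC subC zC cY k0 k1 k2 k3 k4 k5 fst snd].

Lemma canon_fr x (Hx : x <> 0) : canonical_lift (fr (Ax x) (Bx x) cY).
Proof.
  assert (Hc : forall u v, cip (dz (RF (fr (Ax x) (Bx x) cY)) u v) (dzb (RF (fr (Ax x) (Bx x) cY)) u v) = (1/2, 0)).
  { intros u v. csimp2. cunf. f_equal; cl. }
  split; [split|]; auto.
  - apply smooth_fr.
  - intros u v. rewrite Hc. cbn [fst snd]. split; [|split; [|split; [|split]]]; try lra.
    + destruct (Req_dec (cos (Bx x * u)) 0) as [H|H].
      * exists 5%nat. split; [lia|]. unfold fr, EE1, EE2, EE3, EE4, F1, F2, cY; simpl.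
        intro H'. assert (H2 := sin2_cos2 (Bx x * u)). unfold Rsqr in H2. rewrite H in H2. nra.
      * exists 4%nat. split; [lia|]. unfold fr, EE1, EE2, EE3, EE4, F1, F2, cY; simpl. 
        intro H'. apply H. lra.
    + csimp2. cunf. ring.
    + csimp2. cunf. f_equal; cl.
Qed.

Lemma cvzero_cfr al be u v : cvzero = cfr al be zC zC u v.
Proof. unfold cvzero, cfr. rewrite <- vzero_fr. reflexivity. Qed.
Lemma smooth_cfr al be p q : smoothCVF (cfr al be p q).
Proof. split; apply smooth_fr. Qed.

Definition kap al be : CVF := cfr al be zC (mk6 0 0 0 (- al / 2) 0 0).
Definition sY (be : R) : R -> R -> CR := fun _ _ => (be * be / 2, 0).
Definition eta1 al be : CVF := cfr al be (mk6 0 (al*be*be/4) 0 0 0 (al*al*be/4)) zC.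
Definition eta2 al be : CVF := cfr al be zC (mk6 0 0 0 (al*be*be/8) 0 0).

Lemma hopf_fr x (Hx : x <> 0) : hopf (fr (Ax x) (Bx x) cY) (kap (Ax x) (Bx x)) (sY (Bx x)).
Proof.
  split; [apply canon_fr; auto|split; [apply smooth_cfr|]].
  intros u v. unfold kap, sY, cmul; cbn [fst snd]. split.
  - split; [|split; [|split]]; csimp2; cunf; f_equal; cl.
  - csimp2. apply cveq_cfr; cunf; f_equal; cl.
Qed.

Lemma willmore_fr x (Hx : x <> 0) : Willmore (fr (Ax x) (Bx x) cY).
Proof.
  exists (kap (Ax x) (Bx x)), (sY (Bx x)), (eta1 (Ax x) (Bx x)), (eta2 (Ax x) (Bx x)).
  split; [apply hopf_fr; auto|split; [apply smooth_cfr|split; [|split]]].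
  - intros u v. unfold kap, eta1. split.
    + split; [|split; [|split]]; csimp2; cunf; f_equal; cl.
    + exists (0,0), (- (Ax x*Ax x/4), 0), (0, Ax x*Ax x/4), (0,0).
      csimp2. apply cveq_cfr; cunf; f_equal; cl.
  - intros u v. unfold eta1, eta2. split.
    + split; [|split; [|split]]; csimp2; cunf; f_equal; cl.
    + exists (- (Ax x*Ax x*Bx x*Bx x/8), 0), (0, 0), (0, 0), (0,0).
      csimp2. apply cveq_cfr; cunf; f_equal; cl.
  - intros u v. unfold eta2, kap, sY, cmul, cconj; cbn [fst snd]. rewrite (cvzero_cfr (Ax x) (Bx x) u v).
    csimp2. apply cveq_cfr; cunf; f_equal; cl.
Qed.

Lemma veq_at x y : veq x y -> x 0%nat = y 0%nat /\ x 1%nat = y 1%nat /\ x 2%nat = y 2%nat /\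
  x 3%nat = y 3%nat /\ x 4%nat = y 4%nat /\ x 5%nat = y 5%nat.
Proof. intro H. repeat split; apply H; lia. Qed.
Lemma ip_veq x x' y y' : veq x x' -> veq y y' -> ip62 x y = ip62 x' y'.
Proof.
  intros H1 H2. apply veq_at in H1. apply veq_at in H2. unfold ip62.
  destruct H1 as (->&->&->&->&->&->). destruct H2 as (->&->&->&->&->&->). reflexivity.
Qed.
Lemma cip_cveq a a' b b' : cveq a a' -> cveq b b' -> cip a b = cip a' b'.
Proof.
  intros [H1 H2] [H3 H4]. unfold cip. rewrite (ip_veq _ _ _ _ H1 H3), (ip_veq _ _ _ _ H2 H4),
    (ip_veq _ _ _ _ H1 H4), (ip_veq _ _ _ _ H2 H3). reflexivity.
Qed.
Lemma cvconj_cveq a a' : cveq a a' -> cveq (cvconj a) (cvconj a').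
Proof. intros [H1 H2]. split; auto. intros i Hi. simpl. rewrite H2; auto. Qed.
Lemma cveq_sym a b : cveq a b -> cveq b a.
Proof. intros [H1 H2]; split; intros i Hi; symmetry; auto. Qed.

Lemma dzb_cveq F G : (forall u v, cveq (F u v) (G u v)) -> forall u v, cveq (dzb F u v) (dzb G u v).
Proof.
  intros H u v. unfold dzb, pu, pv. split; intros i Hi; cbn [fst snd]; unfold vscal, vsub, vadd.
  - assert (E1' : (fun s => fst (F s v) i) = (fun s => fst (G s v) i)).
    { fext. apply (H _ _); auto. }
    assert (E2' : (fun s => snd (F u s) i) = (fun s => snd (G u s) i)).
    { fext. apply (H _ _); auto. }
    rewrite E1', E2'. reflexivity.
  - assert (E1' : (fun s => snd (F s v) i) = (fun s => snd (G s v) i)).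
    { fext. apply (H _ _); auto. }
    assert (E2' : (fun s => fst (F u s) i) = (fun s => fst (G u s) i)).
    { fext. apply (H _ _); auto. }
    rewrite E1', E2'. reflexivity.
Qed.

Lemma cip_cvadd_l x y z : cip (cvadd x y) z = (fst (cip x z) + fst (cip y z), snd (cip x z) + snd (cip y z)).
Proof. destruct x, y, z. unfold cip, cvadd, ip62, vadd; simpl. f_equal; ring. Qed.
Lemma cip_cvsub_l x y z : cip (cvsub x y) z = (fst (cip x z) - fst (cip y z), snd (cip x z) - snd (cip y z)).
Proof. destruct x, y, z. unfold cip, cvsub, ip62, vsub; simpl. f_equal; ring. Qed.
Lemma cip_cvscal_l a x z : cip (cvscal a x) z = cmul a (cip x z).
Proof. destruct a, x, z. unfold cip, cvscal, cmul, ip62; simpl. f_equal; ring. Qed.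
Lemma cip_cvzero_l z : cip cvzero z = (0, 0).
Proof. destruct z. unfold cip, cvzero, vzero, ip62; simpl. f_equal; ring. Qed.

Lemma cveq_refl a : cveq a a.
Proof. split; intros i _; reflexivity. Qed.
Lemma cveq_trans a b c : cveq a b -> cveq b c -> cveq a c.
Proof. intros [H1 H2] [H3 H4]; split; intros i Hi; [rewrite H1, H3|rewrite H2, H4]; auto. Qed.
Lemma cveq_solve al be P Q R S k u v :
  cveq (cfr al be P Q u v) (cvadd (cfr al be R S u v) k) -> cveq k (cfr al be (subC P R) (subC Q S) u v).
Proof.
  assert (Hs : forall P R i, fr al be (subC P R) u v i = fr al be P u v i - fr al be R u v i).
  { intros. unfold fr, subC; cbn [k0 k1 k2 k3 k4 k5]. ring. }
  intros [H1 H2]. unfold cfr, cvadd, vadd in *; cbn [fst snd] in *.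
  split; intros i Hi; cbn [fst snd]; rewrite Hs;
   [rewrite (H1 i Hi) | rewrite (H2 i Hi)]; ring.
Qed.

Lemma kap_unique x (Hx : x <> 0) kp s : hopf (fr (Ax x) (Bx x) cY) kp s ->
  forall u v, s u v = sY (Bx x) u v /\ cveq (kp u v) (kap (Ax x) (Bx x) u v).
Proof.
  intros [_ [_ H]] u v. destruct (H u v) as [[_ [_ [_ Hp4]]] Heq].
  pose proof (cip_cveq _ _ _ _ Heq (cveq_refl (dzb (dz (RF (fr (Ax x) (Bx x) cY))) u v))) as E.
  rewrite cip_cvadd_l, cip_cvscal_l, Hp4 in E.
  assert (C1 : cip (dz (dz (RF (fr (Ax x) (Bx x) cY))) u v) (dzb (dz (RF (fr (Ax x) (Bx x) cY))) u v)
     = (Bx x * Bx x / 8, 0)) by (csimp2; cunf; f_equal; cl).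
  assert (C2 : cip (of_real (fr (Ax x) (Bx x) cY u v)) (dzb (dz (RF (fr (Ax x) (Bx x) cY))) u v)
     = (-1/2, 0)) by (csimp2; cunf; f_equal; cl).
  rewrite C1, C2 in E.
  destruct (s u v) as [s1 s2] eqn:Es.
  unfold cmul in E; cbn [fst snd] in E. injection E. intros E2 E1.
  set (b2 := Bx x * Bx x) in *.
  assert (Hs1 : s1 = b2 / 2) by lra. assert (Hs2 : s2 = 0) by lra.
  subst s1 s2. split; [reflexivity|].
  revert Heq. unfold cmul; cbn [fst snd]. csimp2. intro Heq.
  apply cveq_solve in Heq. eapply cveq_trans; [exact Heq|].
  unfold kap. apply cveq_cfr; cunf; f_equal; unfold b2; cl.
Qed.

Definition cE4 := mk6 0 0 0 1 0 0.
Definition cG x := mk6 0 (Bx x) 0 0 0 (Ax x).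

Lemma inV_perp_vals x (Hx : x <> 0) w u v Z : inV (fr (Ax x) (Bx x) cY) u v w ->
  (Z = cE4 \/ Z = cG x) -> cip w (cfr (Ax x) (Bx x) Z zC u v) = (0, 0).
Proof.
  intros [a [b [c [d Hw]]]] HZ. rewrite (cip_cveq _ _ _ _ Hw (cveq_refl _)).
  rewrite !cip_cvadd_l, !cip_cvscal_l.
  destruct a as [a1 a2], b as [b1 b2], c as [c1 c2], d as [d1 d2].
  destruct HZ as [-> | ->]; unfold cE4, cG; csimp2; cunf; unfold cmul; cbn [fst snd]; f_equal; cl.
Qed.

Lemma notS x (Hx : x <> 0) (HA : Ax x <> 0) (HB : Bx x <> 0) : ~ SWillmore (fr (Ax x) (Bx x) cY).
Proof.
  intros [_ [kp [s [e1 [Hh [HD Hpar]]]]]].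
  pose proof (kap_unique x Hx kp s Hh) as KU.
  destruct (Hpar 0 0) as [a [b [Hne Hz]]].
  set (u := 0) in *. set (v := 0) in *.
  assert (Kz : forall Z, cip (kp u v) (cfr (Ax x) (Bx x) Z zC u v) = cip (kap (Ax x) (Bx x) u v) (cfr (Ax x) (Bx x) Z zC u v)).
  { intro Z. apply cip_cveq; [apply KU | apply cveq_refl]. }
  assert (Ez : forall Z, (Z = cE4 \/ Z = cG x) ->
     cip (e1 u v) (cfr (Ax x) (Bx x) Z zC u v) = cip (dzb (kap (Ax x) (Bx x)) u v) (cfr (Ax x) (Bx x) Z zC u v)).
  { intros Z HZ. destruct (HD u v) as [_ HV].
    pose proof (inV_perp_vals x Hx _ u v Z HV HZ) as H0. rewrite cip_cvsub_l in H0.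
    rewrite (cip_cveq _ _ _ _ (dzb_cveq _ _ (fun u v => proj2 (KU u v)) u v) (cveq_refl _)) in H0.
    destruct (cip (dzb (kap (Ax x) (Bx x)) u v) (cfr (Ax x) (Bx x) Z zC u v)) as [p1 p2].
    destruct (cip (e1 u v) (cfr (Ax x) (Bx x) Z zC u v)) as [q1 q2].
    cbn [fst snd] in H0. injection H0; intros. f_equal; lra. }
  pose proof (cip_cveq _ _ _ _ Hz (cveq_refl (cfr (Ax x) (Bx x) cE4 zC u v))) as H4.
  pose proof (cip_cveq _ _ _ _ Hz (cveq_refl (cfr (Ax x) (Bx x) (cG x) zC u v))) as HG.
  rewrite cip_cvzero_l, cip_cvadd_l, !cip_cvscal_l, Kz, Ez in H4 by auto.
  rewrite cip_cvzero_l, cip_cvadd_l, !cip_cvscal_l, Kz, Ez in HG by auto.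
  revert H4 HG. unfold kap, cE4, cG. csimp2. cunf.
  destruct a as [a1 a2], b as [b1 b2]. unfold cmul; cbn [fst snd].
  intros H4 HG. injection H4; injection HG; intros. clear H4 HG.
  ring_simplify in H0. ring_simplify in H1. ring_simplify in H2. ring_simplify in H.
  assert (HA2 : - Ax x / 2 <> 0).
  { unfold Rdiv. apply Rmult_integral_contrapositive_currified; [apply Ropp_neq_0_compat; auto | apply Rinv_neq_0_compat; lra]. }
  assert (Hh2 : 1/2 <> 0) by lra.
  assert (Ha2 : a2 = 0).
  { assert (K : 1/2 * (-Ax x/2) * Bx x <> 0) by
      (apply Rmult_integral_contrapositive_currified; [apply Rmult_integral_contrapositive_currified|]; auto).
    apply Rmult_integral in H as [H|H]; [contradiction|auto]. }
  assert (Ha1 : a1 = 0).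
  { apply Rmult_integral in H0 as [H0|H0]; [|contradiction].
    apply Rmult_integral in H0 as [H0|H0]; [|contradiction].
    apply Rmult_integral in H0 as [H0|H0]; [auto|contradiction]. }
  assert (Hb1 : b1 = 0).
  { apply Rmult_integral in H1 as [H1|H1]; [contradiction|auto]. }
  assert (Hb2 : b2 = 0).
  { apply Rmult_integral in H2 as [H2|H2]; [|auto]. exfalso. apply HA2. replace (- Ax x / 2) with (- (- (- Ax x / 2))) by ring. rewrite H2. ring. }
  subst. apply Hne. reflexivity.
Qed.

Definition cN h := mk6 (-h) 0 0 0 h 0.
Definition cL al be r := mk6 0 (- be * r) 0 r 0 (- al * r).
Definition cR al be r := mk6 0 (- be * r) 0 (- r) 0 (- al * r).

Lemma det_fr al be r h u v :
  det6 (fr al be cY u v) (fr al be (Du al be cY) u v) (fr al be (Dv cY) u v) (fr al be (cN h) u v)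
       (fr al be (cR al be r) u v) (fr al be (cL al be r) u v) =
  4 * h * (al*al - be*be) * (r*r) * ((cos (al*u)^2 + sin (al*u)^2) * (cos v ^2 + sin v ^2))^2 * (cos (be*u)^2 + sin (be*u)^2).
Proof.
  unfold det6. cbv beta iota zeta delta [detn sumR Nat.ltb Nat.leb fr EE1 EE2 EE3 EE4 F1 F2 cY Du Dv cN cL cR k0 k1 k2 k3 k4 k5].
  ring.
Qed.

Lemma frame_fr x (Hx : x <> 0) r (Hr : r * r = / 2) :
  frame (fr (Ax x) (Bx x) cY) (fr (Ax x) (Bx x) (cN (1/2))) (fr (Ax x) (Bx x) (cL (Ax x) (Bx x) r))
        (fr (Ax x) (Bx x) (cR (Ax x) (Bx x) r)).
Proof.
  intros u v. split; [|split; [|split; [|split; [|split; [|split; [|split; [|split; [|split]]]]]]]].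
  - exists ((1 + Bx x * Bx x) / 2, 0), (0, 0), (0, 0), (2, 0).
    csimp2. apply cveq_cfr; unfold cN; cunf; f_equal; cl.
  - csimp2. unfold cN; cunf; f_equal; cl.
  - csimp2. unfold cN; cunf; cl.
  - csimp2. unfold cN; cunf; cl.
  - split; [|split; [|split]]; csimp2; unfold cL; cunf; f_equal; cl.
  - split; [|split; [|split]]; csimp2; unfold cR; cunf; f_equal; cl.
  - csimp2. unfold cL; cunf. transitivity (0 * (r*r)); [cl|ring].
  - csimp2. unfold cR; cunf. transitivity (0 * (r*r)); [cl|ring].
  - csimp2. unfold cL, cR; cunf. transitivity (-2 * (r*r)); [cl|rewrite Hr; field].
  - rewrite pu_fr, pv_fr, det_fr.
    assert (H1 := sin2_cos2 (Ax x * u)). assert (H2 := sin2_cos2 v). assert (H3 := sin2_cos2 (Bx x * u)).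
    unfold Rsqr in *. simpl. rewrite !Rmult_1_r.
    rewrite (Rplus_comm (cos (Ax x * u) * _)), (Rplus_comm (cos v * _)), (Rplus_comm (cos (Bx x * u) * _)).
    rewrite H1, H2, H3, Hr.
    replace (Ax x * Ax x - Bx x * Bx x) with 1 by cl. lra.
Qed.

Lemma Yt_fr t : Yt t = fr (t / sqrt (t^2-1)) (1 / sqrt (t^2-1)) cY.
Proof.
  fext. fext. fext. rename x into u, x0 into v, x1 into i.
  unfold Yt, fr, EE1, EE2, EE3, EE4, F1, F2, cY; cbn [k0 k1 k2 k3 k4 k5].
  replace (t * u / sqrt (t^2-1)) with (t / sqrt (t^2-1) * u) by (unfold Rdiv; ring).
  replace (u / sqrt (t^2-1)) with (1 / sqrt (t^2-1) * u) by (unfold Rdiv; ring).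
  dest6 i; ring.
Qed.

Lemma AB_t t (Ht : 1 < t) :
  let S := sqrt (t^2-1) in Ax ((t+1)/S) = t / S /\ Bx ((t+1)/S) = 1 / S /\ 0 < S.
Proof.
  intro S. assert (HS : 0 < S) by (apply sqrt_lt_R0; nra).
  assert (HS2 : S * S = t^2 - 1) by (apply sqrt_sqrt; nra).
  assert (Hi : / ((t+1)/S) = (t-1)/S).
  { field_simplify_eq; [|split; lra]. replace (S^2) with (S*S) by ring. rewrite HS2. ring. }
  unfold Ax, Bx. rewrite Hi. split; [|split]; auto; field; lra.
Qed.

Lemma part1 t : 1 < t ->
     canonical_lift (Yt t) /\ Willmore (Yt t) /\ ~ SWillmore (Yt t) /\
     exists kappa s, hopf (Yt t) kappa s /\
       exists N L Rr, frame (Yt t) N L Rr /\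
         forall u v, cveq (kappa u v)
           (cvscal (0, - (t / (2 * sqrt 2 * sqrt (t ^ 2 - 1))))
                   (of_real (vsub (L u v) (Rr u v)))).
Proof.
  intros Ht. destruct (AB_t t Ht) as [HA [HB HS]].
  set (S := sqrt (t^2-1)) in *. set (x := (t+1)/S) in *.
  assert (Hx : x <> 0) by (unfold x; apply Rgt_not_eq, Rdiv_lt_0_compat; lra).
  assert (HA0 : Ax x <> 0) by (rewrite HA; apply Rgt_not_eq, Rdiv_lt_0_compat; lra).
  assert (HB0 : Bx x <> 0) by (rewrite HB; apply Rgt_not_eq, Rdiv_lt_0_compat; lra).
  rewrite Yt_fr. fold S. rewrite <- HA, <- HB.
  split; [apply canon_fr; auto|split; [apply willmore_fr; auto|split; [apply notS; auto|]]].
  exists (kap (Ax x) (Bx x)), (sY (Bx x)). split; [apply hopf_fr; auto|].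
  assert (Hs2 : sqrt 2 * sqrt 2 = 2) by (apply sqrt_sqrt; lra).
  assert (Hs0 : 0 < sqrt 2) by (apply sqrt_lt_R0; lra).
  exists (fr (Ax x) (Bx x) (cN (1/2))), (fr (Ax x) (Bx x) (cL (Ax x) (Bx x) (/ sqrt 2))),
    (fr (Ax x) (Bx x) (cR (Ax x) (Bx x) (/ sqrt 2))).
  split.
  - apply frame_fr; auto. rewrite <- Rinv_mult, Hs2. reflexivity.
  - intros u v. unfold kap. rewrite vsub_fr, of_real_fr, cvscal_cfr.
    apply cveq_cfr; unfold cL, cR; cunf; f_equal; rewrite ?HA; try field; try lra.
    replace (/ sqrt 2 - - / sqrt 2) with (2 / sqrt 2) by (field; lra).
    field_simplify_eq; [|lra]. replace (sqrt 2 ^ 2) with 2 by (simpl; rewrite Rmult_1_r; symmetry; exact Hs2). ring.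
Qed.

Lemma is_RInt_const f a b K : (forall y, f y = K) -> is_RInt f a b (K*(b-a)).
Proof.
  intro H. assert (E : f = fct_cte K) by (fext; apply H). subst f.
  exists (RiemannInt_P14 a b K). apply RiemannInt_P15.
Qed.
Lemma is_RInt_const_uniq f a b K l : (forall y, f y = K) -> is_RInt f a b l -> l = K*(b-a).
Proof.
  intros H [pr <-]. assert (E : f = fct_cte K) by (fext; apply H). subst f. apply RiemannInt_P15.
Qed.
Lemma is_RInt2_const F a b c d K : (forall x y, F x y = K) -> is_RInt2 F a b c d (K*(d-c)*(b-a)).
Proof.
  intro H. exists (fun _ => K*(d-c)). split.
  - intros x _. apply is_RInt_const; auto.
  - apply is_RInt_const; auto.
Qed.
Lemma is_RInt2_const_uniq F a b c d K l : a <= b -> (forall x y, F x y = K) -> is_RInt2 F a b c d l ->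
  l = K*(d-c)*(b-a).
Proof.
  intros Hab H [g [Hg [pr <-]]].
  rewrite (RiemannInt_P18 pr (RiemannInt_P14 a b (K*(d-c)))); auto.
  - apply RiemannInt_P15.
  - intros y Hy. unfold fct_cte. apply (is_RInt_const_uniq (fun z => F y z) c d K); auto. apply Hg. lra.
Qed.

Lemma integrand x (Hx : x <> 0) kp s : hopf (fr (Ax x) (Bx x) cY) kp s ->
  forall u v, fst (cip (kp u v) (cvconj (kp u v))) = Ax x * Ax x / 4.
Proof.
  intros H u v. pose proof (proj2 (kap_unique x Hx kp s H u v)) as K.
  rewrite (cip_cveq _ _ _ _ K (cvconj_cveq _ _ K)). unfold kap. csimp2. cunf. field.
Qed.

Lemma Wval_fr x (Hx : x <> 0) T1 T2 :
  Wval (fr (Ax x) (Bx x) cY) T1 T2 (Ax x * Ax x / 4 * (T2 - 0) * (T1 - 0)).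
Proof.
  exists (kap (Ax x) (Bx x)), (sY (Bx x)). split; [apply hopf_fr; auto|].
  apply is_RInt2_const. intros u v. apply (integrand x Hx _ _ (hopf_fr x Hx)).
Qed.
Lemma Wval_fr_uniq x (Hx : x <> 0) T1 T2 w : 0 <= T1 ->
  Wval (fr (Ax x) (Bx x) cY) T1 T2 w -> w = Ax x * Ax x / 4 * (T2 - 0) * (T1 - 0).
Proof.
  intros H1 [kp [s [Hh HI]]]. eapply is_RInt2_const_uniq; eauto.
  intros u v. apply (integrand x Hx _ _ Hh).
Qed.

Lemma Wval_t t (Ht : 1 < t) T1 T2 :
  Wval (Yt t) T1 T2 (t / sqrt (t^2-1) * (t / sqrt (t^2-1)) / 4 * (T2 - 0) * (T1 - 0)).
Proof.
  destruct (AB_t t Ht) as [HA [HB HS]].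
  assert (Hx : (t+1)/sqrt (t^2-1) <> 0) by (apply Rgt_not_eq, Rdiv_lt_0_compat; lra).
  rewrite Yt_fr, <- HA, <- HB. apply Wval_fr; auto.
Qed.
Lemma Wval_t_uniq t (Ht : 1 < t) T1 T2 w : 0 <= T1 -> Wval (Yt t) T1 T2 w ->
  w = t / sqrt (t^2-1) * (t / sqrt (t^2-1)) / 4 * (T2 - 0) * (T1 - 0).
Proof.
  destruct (AB_t t Ht) as [HA [HB HS]].
  assert (Hx : (t+1)/sqrt (t^2-1) <> 0) by (apply Rgt_not_eq, Rdiv_lt_0_compat; lra).
  rewrite Yt_fr, <- HA, <- HB. intros. rewrite HA. rewrite <- HA. eapply Wval_fr_uniq; eauto.
Qed.

Lemma adm_real p q : admissible p q -> 1 <= INR q /\ INR q + 1 <= INR p.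
Proof.
  intros [H1 [H2 _]]. split.
  - apply (le_INR 1 q) in H1. simpl in H1. lra.
  - apply le_INR in H2. rewrite S_INR in H2. lra.
Qed.

Lemma S_eq p q : 0 < q -> q < p -> sqrt ((p/q)^2 - 1) = sqrt (p^2 - q^2) / q.
Proof.
  intros Hq Hp. assert (H0 : 0 < p^2 - q^2) by nra.
  assert (Hs : sqrt (p^2-q^2) * sqrt (p^2-q^2) = p^2 - q^2) by (apply sqrt_sqrt; lra).
  assert (Hs0 : 0 < sqrt (p^2-q^2)) by (apply sqrt_lt_R0; lra).
  rewrite <- (sqrt_pow2 (sqrt (p^2 - q^2) / q)) by (apply Rlt_le, Rdiv_lt_0_compat; lra).
  f_equal. field_simplify; try lra. replace (sqrt (p^2-q^2) ^ 2) with (p^2 - q^2) by (symmetry; apply pow2_sqrt; lra).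
  reflexivity.
Qed.

Lemma W_value p q : admissible p q ->
  let t := INR p / INR q in
  t / sqrt (t^2-1) * (t / sqrt (t^2-1)) / 4 * (2 * PI - 0) * (2 * PI * INR q * sqrt (t ^ 2 - 1) - 0)
  = INR p ^ 2 / sqrt (INR p ^ 2 - INR q ^ 2) * PI ^ 2.
Proof.
  intros Ha t. destruct (adm_real p q Ha) as [H1 H2]. unfold t.
  rewrite S_eq by lra.
  assert (Hs0 : 0 < sqrt (INR p^2-INR q^2)) by (apply sqrt_lt_R0; nra).
  field. lra.
Qed.

Lemma t_gt1 p q : admissible p q -> 1 < INR p / INR q.
Proof.
  intros Ha. destruct (adm_real p q Ha) as [H1 H2].
  apply (Rmult_lt_reg_r (INR q)); [lra|]. unfold Rdiv. rewrite Rmult_assoc, Rinv_l; lra.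
Qed.

Lemma part2 p q : admissible p q ->
     let t := INR p / INR q in
     periodic (Yt t) (2 * PI * INR q * sqrt (t ^ 2 - 1)) (2 * PI) /\
     Wval (Yt t) (2 * PI * INR q * sqrt (t ^ 2 - 1)) (2 * PI)
          (INR p ^ 2 / sqrt (INR p ^ 2 - INR q ^ 2) * PI ^ 2).
Proof.
  intros Ha t. pose proof (t_gt1 p q Ha) as Ht. fold t in Ht.
  destruct (adm_real p q Ha) as [H1 H2].
  split.
  - assert (HS : 0 < sqrt (t^2-1)) by (apply sqrt_lt_R0; nra).
    assert (Htq : t * INR q = INR p) by (unfold t; field; lra).
    intros u v. split; intros i Hi; unfold Yt; cbv zeta.
    + replace (t * (u + 2 * PI * INR q * sqrt (t ^ 2 - 1)) / sqrt (t ^ 2 - 1))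
        with (t * u / sqrt (t^2-1) + 2 * INR p * PI) by (rewrite <- Htq; field; lra).
      replace ((u + 2 * PI * INR q * sqrt (t ^ 2 - 1)) / sqrt (t ^ 2 - 1))
        with (u / sqrt (t^2-1) + 2 * INR q * PI) by (field; lra).
      rewrite !cos_period, !sin_period. reflexivity.
    + replace (v + 2 * PI) with (v + 2 * INR 1 * PI) by (simpl; ring).
      rewrite !cos_period, !sin_period. reflexivity.
  - rewrite <- (W_value p q Ha). apply Wval_t; auto.
Qed.

Lemma ineq P Q : 1 <= Q -> Q + 1 <= P -> 4 / sqrt 3 <= P^2 / sqrt (P^2 - Q^2).
Proof.
  intros H1 H2.
  assert (Hy : 0 < P^2 - Q^2) by nra.
  assert (s3p : 0 < sqrt 3) by (apply sqrt_lt_R0; lra).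
  assert (syp : 0 < sqrt (P^2-Q^2)) by (apply sqrt_lt_R0; lra).
  assert (s3s : sqrt 3 * sqrt 3 = 3) by (apply sqrt_sqrt; lra).
  assert (sys : sqrt (P^2-Q^2) * sqrt (P^2-Q^2) = P^2-Q^2) by (apply sqrt_sqrt; lra).
  set (s3 := sqrt 3) in *. set (sy := sqrt (P^2-Q^2)) in *.
  assert (P2 : 4 <= P^2) by (simpl; nra). assert (Q2 : 1 <= Q^2) by (simpl; nra).
  assert (K0 : 0 <= (3*P^2-4)*(P^2-4)) by (apply Rmult_le_pos; lra).
  assert (K : 16 * (P^2 - Q^2) <= 3 * (P^2 * P^2)) by nra.
  assert (K2 : 4 * sy <= P^2 * s3).
  { apply Rsqr_incr_0_var; [|nra]. unfold Rsqr.
    replace (4 * sy * (4 * sy)) with (16 * (sy * sy)) by ring.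
    replace (P^2 * s3 * (P^2 * s3)) with (3 * (P^2 * P^2)) by (rewrite <- s3s; ring).
    rewrite sys. exact K. }
  apply (Rmult_le_reg_r (s3 * sy)); [nra|].
  replace (4 / s3 * (s3 * sy)) with (4 * sy) by (field; lra).
  replace (P ^ 2 / sy * (s3 * sy)) with (P^2 * s3) by (field; lra). exact K2.
Qed.

Lemma part3 p q : admissible p q ->
     forall w, Wval (Yt (INR p / INR q)) (2 * PI * INR q * sqrt ((INR p / INR q) ^ 2 - 1))
                    (2 * PI) w ->
       4 / sqrt 3 * PI ^ 2 <= w.
Proof.
  intros Ha w HW. pose proof (t_gt1 p q Ha) as Ht. destruct (adm_real p q Ha) as [H1 H2].
  apply Wval_t_uniq in HW; auto.
  - rewrite HW, (W_value p q Ha). apply Rmult_le_compat_r.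
    + apply pow_le. pose proof PI_RGT_0; lra.
    + apply ineq; auto.
  - assert (0 <= sqrt ((INR p / INR q) ^ 2 - 1)) by apply sqrt_pos.
    pose proof PI_RGT_0. apply Rmult_le_pos; auto. nra.
Qed.

Lemma part4 : exists p q : nat, admissible p q /\
     Wval (Yt (INR p / INR q)) (2 * PI * INR q * sqrt ((INR p / INR q) ^ 2 - 1))
          (2 * PI) (4 / sqrt 3 * PI ^ 2).
Proof.
  assert (Ha : admissible 2 1) by (unfold admissible; repeat split; auto).
  exists 2%nat, 1%nat. split; auto.
  replace (4 / sqrt 3 * PI ^ 2) with (INR 2 ^ 2 / sqrt (INR 2 ^ 2 - INR 1 ^ 2) * PI ^ 2).
  - apply (part2 2 1 Ha).
  - simpl. replace ((1 + 1) * ((1 + 1) * 1) - 1 * (1 * 1)) with 3 by ring. field.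
    apply Rgt_not_eq, sqrt_lt_R0. lra.
Qed.

Theorem mainTheorem12 :
  (forall t : R, 1 < t ->
     canonical_lift (Yt t) /\ Willmore (Yt t) /\ ~ SWillmore (Yt t) /\
     exists kappa s, hopf (Yt t) kappa s /\
       exists N L Rr, frame (Yt t) N L Rr /\
         forall u v, cveq (kappa u v)
           (cvscal (0, - (t / (2 * sqrt 2 * sqrt (t ^ 2 - 1))))
                   (of_real (vsub (L u v) (Rr u v))))) /\
  (forall p q : nat, admissible p q ->
     let t := INR p / INR q in
     periodic (Yt t) (2 * PI * INR q * sqrt (t ^ 2 - 1)) (2 * PI) /\
     Wval (Yt t) (2 * PI * INR q * sqrt (t ^ 2 - 1)) (2 * PI)
          (INR p ^ 2 / sqrt (INR p ^ 2 - INR q ^ 2) * PI ^ 2)) /\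
  (forall p q : nat, admissible p q ->
     forall w, Wval (Yt (INR p / INR q)) (2 * PI * INR q * sqrt ((INR p / INR q) ^ 2 - 1))
                    (2 * PI) w ->
       4 / sqrt 3 * PI ^ 2 <= w) /\
  (exists p q : nat, admissible p q /\
     Wval (Yt (INR p / INR q)) (2 * PI * INR q * sqrt ((INR p / INR q) ^ 2 - 1))
          (2 * PI) (4 / sqrt 3 * PI ^ 2)).
Proof.
  split; [exact part1|split; [exact part2|split; [exact part3|exact part4]]].
Qed.
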